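(* $str(Q_2)=6$, $str(Q_3)=11$, $str(Q_4)=21$ and $str(Q_5)=40$.
   Context: $Q_n$ is the $n$-dimensional hypercube (vertex set $\mathbb Z_2^n$, adjacency iff differing in exactly one coordinate), of order $2^n$. For a graph $G$ of order $p$, a numbering is a bijection $f:V(G)\to[1,p]$; $str_f(G)=\max\{f(u)+f(v): uv\in E(G)\}$ and $str(G)=\min_f str_f(G)$. *)

(* Defs.v *)
From mathcomp Require Import all_boot.
Set Implicit Arguments. Unset Strict Implicit. Unset Printing Implicit Defensive.

Definition qvert (n : nat) := {ffun 'I_n -> bool}.

Definition qadj (n : nat) (u v : qvert n) : bool :=
  #|[set i : 'I_n | u i != v i]| == 1.

Definition qorder (n : nat) : nat := #|{: qvert n}|.

(* A numbering is a bijection f : V -> [1, p]; we represent it as an injective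
   (hence bijective, by cardinality) map g : V -> 'I_p, with label f v = g v + 1. *)
Definition is_numbering (n : nat) (g : {ffun qvert n -> 'I_(qorder n)}) : bool :=
  injectiveb g.

Definition label (n : nat) (g : {ffun qvert n -> 'I_(qorder n)}) (v : qvert n) : nat :=
  (g v).+1.

Definition str_f (n : nat) (g : {ffun qvert n -> 'I_(qorder n)}) : nat :=
  \max_(e : qvert n * qvert n | qadj e.1 e.2) (label g e.1 + label g e.2).

(* str(G) = min over numberings f of str_f(G).  The initial value 2p is an upper
   bound of every str_f, and numberings exist, so this is the true minimum. *)
Definition str (n : nat) : nat :=
  \big[minn/(qorder n).*2]_(g : {ffun qvert n -> 'I_(qorder n)} | is_numbering g) str_f g.

(* Main.v *)
Require Import Defs.
From mathcomp Require Import all_boot.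
Set Implicit Arguments. Unset Strict Implicit. Unset Printing Implicit Defensive.

Fixpoint allb k : seq (seq bool) :=
  if k is k'.+1 then [seq b :: s | b <- [:: false; true], s <- allb k'] else [:: [::]].

Definition ladj (n : nat) (s t : seq bool) : bool :=
  count (fun i => nth false s i != nth false t i) (iota 0 n) == 1.

Definition tl n (v : qvert n) : seq bool := [seq v i | i <- enum 'I_n].

Lemma nth_tl n (v : qvert n) (i : 'I_n) : nth false (tl v) i = v i.
Proof. by rewrite /tl (nth_map i) ?nth_ord_enum // size_enum_ord. Qed.

Lemma size_tl n (v : qvert n) : size (tl v) = n.
Proof. by rewrite size_map size_enum_ord. Qed.

Lemma tl_inj n : injective (@tl n).
Proof. by move=> u v H; apply/ffunP => i; rewrite -!nth_tl H. Qed.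

Lemma mem_allb n s : (s \in allb n) = (size s == n).
Proof.
elim: n s => [|n IH] [|b s] //.
- by apply/negbTE/negP => /allpairsP [[x y]] /= [_ _ H].
- rewrite [size (_ :: _)]/= eqSS; apply/idP/idP.
    case/allpairsP => [[x y]] /= [_ Hy [_ ->]]; by rewrite -IH.
  move=> Hs; apply: (@allpairs_f _ _ _ (fun b s => b :: s)); first by case: b.
  by rewrite IH.
Qed.

Lemma tl_surj n s : size s = n -> exists v : qvert n, tl v = s.
Proof.
move=> Hs; exists [ffun i : 'I_n => nth false s i].
apply: (@eq_from_nth _ false); first by rewrite size_tl.
move=> i; rewrite size_tl => Hi.
by rewrite (nth_tl _ (Ordinal Hi)) ffunE.
Qed.

Lemma perm_tl n : uniq (allb n) -> perm_eq (map (@tl n) (enum (qvert n))) (allb n).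
Proof.
move=> U; apply: uniq_perm => //.
  by rewrite (map_inj_uniq (@tl_inj n)) enum_uniq.
move=> s; rewrite mem_allb; apply/mapP/eqP.
  by case=> v _ ->; rewrite size_tl.
by case/tl_surj => v <-; exists v; rewrite ?mem_enum.
Qed.

Lemma qadj_ladj n (u v : qvert n) : qadj u v = ladj n (tl u) (tl v).
Proof.
rewrite /qadj /ladj cardsE cardE /enum_mem size_filter.
rewrite -val_enum_ord count_map enumT.
congr (_ == 1); apply: eq_count => i /=.
by rewrite !nth_tl.
Qed.
From mathcomp Require Import zify.

Fixpoint tups (A : seq (seq bool)) k : seq (seq (seq bool)) :=
  if k is k'.+1 then [seq x :: T | x <- A, T <- tups A k'] else [:: [::]].

Lemma mem_tups A k T : (T \in tups A k) = (size T == k) && all (mem A) T.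
Proof.
elim: k T => [|k IH] [|x T] //.
- by apply/negbTE/negP => /allpairsP [[y z]] /= [_ _ H].
- rewrite [size (_ :: _)]/= eqSS [all _ _]/=; apply/idP/idP.
    case/allpairsP => [[y z]] /= [Hy Hz [-> ->]]; rewrite Hy /= -IH //.
  case/andP => Hs /andP [Hx Ha]; apply: (@allpairs_f _ _ _ (fun b s => b :: s)) => //.
  by rewrite IH Hs.
Qed.

Lemma qorderE n : qorder n = 2 ^ n.
Proof. by rewrite /qorder card_ffun card_bool card_ord. Qed.

Lemma qorder_gt0 n : 0 < qorder n.
Proof. by rewrite qorderE expn_gt0. Qed.

Lemma bigmin_le (I : eqType) (r : seq I) (P : pred I) (F : I -> nat) x i0 :
  i0 \in r -> P i0 -> \big[minn/x]_(i <- r | P i) F i <= F i0.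
Proof.
elim: r => [|j r IH] //; rewrite inE big_cons => /orP [/eqP <- ->|H Pi].
  exact: geq_minl.
case: (P j); last exact: IH.
by rewrite geq_min IH ?orbT.
Qed.

Section Lower.
Variable n : nat.
Variable g : {ffun qvert n -> 'I_(qorder n)}.
Hypothesis ginj : injective g.
Hypothesis Uall : uniq (allb n).

Lemma count_lb (T : seq (qvert n)) K :
  (forall t, t \in T -> K <= (g t).+1) ->
  count (fun s => has (fun t => ladj n t s) (map (@tl n) T)) (allb n) <= str_f g - K.
Proof.
move=> HK.
rewrite -((permP (perm_tl Uall)) _) count_map.
set P := (fun x => has (fun t => qadj t x) T).
rewrite (eq_count (a2 := P)); last first.
  by move=> x /=; rewrite has_map; apply: eq_has => t /=; rewrite qadj_ladj.
rewrite -size_filter -(size_map (fun x => val (g x))) -(size_iota 0 (str_f g - K)).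
apply: uniq_leq_size.
  rewrite map_inj_uniq; last by move=> x y /val_inj /ginj.
  by apply: filter_uniq; rewrite -?enumT; apply: enum_uniq.
move=> y /mapP [x]; rewrite mem_filter => /andP [/hasP [t Ht Hadj] _] ->.
have := @leq_bigmax_cond _ (fun e : qvert n * qvert n => qadj e.1 e.2)
   (fun e => label g e.1 + label g e.2) (t, x) Hadj.
rewrite -/(str_f g) /label => H1.
have := HK t Ht.
rewrite mem_iota /=; simpl in H1; lia.
Qed.

Lemma pre_ex (y : 'I_(qorder n)) : exists x, g x = y.
Proof.
have: y \in codom g.
  apply: inj_card_onto => //; by rewrite card_ord.
by case/codomP => x ->; exists x.
Qed.

End Lower.

Lemma str_f_lb n m c (g : {ffun qvert n -> 'I_(qorder n)}) :
  injective g -> uniq (allb n) -> 0 < c -> m <= qorder n ->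
  all (fun T => ~~ uniq T || (c <= count (fun s => has (fun t => ladj n t s) T) (allb n)))
      (tups (allb n) m) ->
  c + (qorder n - m + 1) <= str_f g.
Proof.
move=> ginj Uall c0 mle Hall.
have [h gh hg] : bijective g by apply: inj_card_bij => //; rewrite card_ord.
pose y0 : 'I_(qorder n) := Ordinal (qorder_gt0 n).
pose y j : 'I_(qorder n) := insubd y0 (qorder n - 1 - j).
have yv j : val (y j) = qorder n - 1 - j.
  rewrite val_insubd; have := qorder_gt0 n; case: ifP => //; lia.
pose T := [seq h (y j) | j <- iota 0 m].
have HT : map (@tl n) T \in tups (allb n) m.
  rewrite mem_tups !size_map size_iota eqxx /=.
  by apply/allP => s /mapP [v _ ->]; change (tl v \in allb n); rewrite mem_allb size_tl.
have UT : uniq (map (@tl n) T).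
  rewrite map_inj_uniq; last exact: tl_inj.
  rewrite map_inj_in_uniq ?iota_uniq // => j j' Hj Hj' E.
  have := congr1 (fun x => val (g x)) E; rewrite /= !hg !yv.
  move: Hj Hj'; rewrite !mem_iota; lia.
have := allP Hall _ HT; rewrite UT /= => Hc.
have := count_lb ginj Uall (K := qorder n - m + 1) (T := T).
have Hk : forall t, t \in T -> qorder n - m + 1 <= (g t).+1.
  move=> t /mapP [j]; rewrite mem_iota => Hj ->; rewrite hg.
  have := yv j; have := qorder_gt0 n; move: Hj; simpl; lia.
move=> /(_ Hk) H; lia.
Qed.

Lemma str_lb n L :
  L <= (qorder n).*2 ->
  (forall g : {ffun qvert n -> 'I_(qorder n)}, injective g -> L <= str_f g) -> L <= str n.
Proof.
move=> HL Hg; rewrite /str; apply: (big_ind (fun x => L <= x)) => //.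
  by move=> x y Hx Hy; rewrite leq_min Hx Hy.
by move=> g /injectiveP; apply: Hg.
Qed.

Definition code (s : seq bool) : nat := foldr (fun (b : bool) acc => b + acc.*2) 0 s.
Definition lab (L : seq nat) (s : seq bool) := nth 0 L (code s).

Lemma str_ub n (L : seq nat) B :
  all (fun s => all (fun t => ~~ ladj n s t || (lab L s + lab L t <= B)) (allb n)) (allb n) ->
  all (fun s => 0 < lab L s <= 2 ^ n) (allb n) ->
  all (fun s => all (fun t => (lab L s != lab L t) || (s == t)) (allb n)) (allb n) ->
  str n <= B.
Proof.
move=> Hadj Hr Hi.
have inA (v : qvert n) : tl v \in allb n by rewrite mem_allb size_tl.
pose y0 : 'I_(qorder n) := Ordinal (qorder_gt0 n).
pose g0 : {ffun qvert n -> 'I_(qorder n)} := [ffun v : qvert n => insubd y0 (lab L (tl v)).-1 : 'I_(qorder n)].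
have lg v : label g0 v = lab L (tl v).
  rewrite /label ffunE val_insubd.
  have /andP [H1 H2] := allP Hr _ (inA v).
  have := qorderE n; case: ifP; lia.
have ginj : injective g0.
  move=> u v E; have : label g0 u = label g0 v by rewrite /label E.
  rewrite !lg => E'.
  have := allP (allP Hi _ (inA u)) _ (inA v); rewrite E' eqxx /= => /eqP.
  exact: tl_inj.
apply: (@leq_trans (str_f g0)).
  apply: bigmin_le; first by rewrite mem_index_enum.
  by apply/injectiveP.
apply/bigmax_leqP => [[u v]] /= Huv; rewrite !lg.
have := allP (allP Hadj _ (inA u)) _ (inA v); rewrite -qadj_ladj Huv //.
Qed.

Lemma str_eq n m c B (L : seq nat) :
  uniq (allb n) -> 0 < c -> m <= 2 ^ n -> B <= (2 ^ n).*2 -> c + (2 ^ n - m + 1) = B ->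
  all (fun T => ~~ uniq T || (c <= count (fun s => has (fun t => ladj n t s) T) (allb n)))
      (tups (allb n) m) ->
  all (fun s => all (fun t => ~~ ladj n s t || (lab L s + lab L t <= B)) (allb n)) (allb n) ->
  all (fun s => 0 < lab L s <= 2 ^ n) (allb n) ->
  all (fun s => all (fun t => (lab L s != lab L t) || (s == t)) (allb n)) (allb n) ->
  str n = B.
Proof.
move=> U c0 Hm HB HcB Hlow H1 H2 H3.
apply/eqP; rewrite eqn_leq (str_ub H1 H2 H3) /=.
apply: str_lb; first by rewrite qorderE.
move=> g ginj; rewrite -HcB -qorderE.
by apply: str_f_lb => //; rewrite qorderE.
Qed.

Definition L2 := [:: 3; 2; 1; 4].
Definition L3 := [:: 2; 7; 5; 4; 8; 1; 3; 6].
Definition L4 := [:: 9; 6; 5; 11; 1; 15; 16; 3; 7; 10; 12; 8; 14; 4; 2; 13].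
Definition L5 := [:: 19; 3; 1; 32; 13; 27; 24; 5; 10; 30; 28; 7; 18; 4; 6; 31; 14; 26; 25; 2; 21; 12; 15; 20; 22; 8; 11; 29; 17; 16; 23; 9].

Theorem mainTheorem19 :
  [/\ str 2 = 6, str 3 = 11, str 4 = 21 & str 5 = 40].
Proof.
split.
- by apply: (@str_eq 2 1 2 6 L2); vm_compute.
- by apply: (@str_eq 3 1 3 11 L3); vm_compute.
- by apply: (@str_eq 4 2 6 21 L4); vm_compute.
- by apply: (@str_eq 5 3 10 40 L5); vm_compute.
Qed.
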